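(* Let $S,T$ be numerical semigroups such that $\mathrm H_S(x^w)f(x)=\mathrm H_T(x)$ for some integer $w\ge1$ and some polynomial $f$ with nonnegative integer coefficients. Put $Q(x)=\mathrm P_T(x)/\mathrm P_S(x^w)$. Then $Q(0)=1$, $Q(x)$ is a monic polynomial, and its nonzero coefficients alternate between $1$ and $-1$.
   Context: A numerical semigroup is a submonoid $S$ of $(\mathbb N,+)$ with finite complement in $\mathbb N$. $\mathrm H_S(x)=\sum_{s\in S}x^s$ and $\mathrm P_S(x)=(1-x)\mathrm H_S(x)$. *)

(* Defs.v *)
From mathcomp Require Import all_boot all_order all_algebra.
Set Implicit Arguments. Unset Strict Implicit. Unset Printing Implicit Defensive.
Import Order.TTheory GRing.Theory Num.Theory.
Local Open Scope ring_scope.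

Definition numerical_semigroup (S : pred nat) : Prop :=
  [/\ S 0%N,
      (forall a b, S a -> S b -> S (a + b)%N) &
      exists N : nat, forall n, (N <= n)%N -> S n].

(* Coefficient of x^n in H_S(x) = sum_{s in S} x^s. *)
Definition Hcoef (S : pred nat) (n : nat) : int := (S n)%:R.

(* Coefficient of x^n in H_S(x^w). *)
Definition Hwcoef (S : pred nat) (w n : nat) : int :=
  ((w %| n)%N && S (n %/ w)%N)%:R.

(* Coefficient of x^n in the formal power series H_S(x^w) f(x). *)
Definition Hw_mul_coef (S : pred nat) (w : nat) (f : {poly int}) (n : nat) : int :=
  \sum_(i < n.+1) f`_i * Hwcoef S w (n - i)%N.

(* Coefficient of x^n in P_S(x) = (1 - x) H_S(x). *)
Definition Pcoef (S : pred nat) (n : nat) : int :=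
  Hcoef S n - (if n is m.+1 then Hcoef S m else 0).

(* p is the polynomial P_S(x) = (1 - x) H_S(x) (a polynomial since S has
   finite complement). *)
Definition is_P_poly (S : pred nat) (p : {poly int}) : Prop :=
  forall n, p`_n = Pcoef S n.

Definition alternating_coefs (q : {poly int}) : Prop :=
  (forall i, q`_i = 0 \/ q`_i = 1 \/ q`_i = -1) /\
  (forall i j, (i < j)%N -> q`_i != 0 -> q`_j != 0 ->
     (forall k, (i < k < j)%N -> q`_k = 0) -> q`_j = - q`_i).

(* Main.v *)
Require Import Defs.
From mathcomp Require Import all_boot all_order all_algebra.
From mathcomp Require Import zify ring lra.
Import GRing.Theory Num.Theory.
Local Open Scope ring_scope.

Definition conv (p : {poly int}) (h : nat -> int) (n : nat) : int :=
  \sum_(i < n.+1) p`_i * h (n - i)%N.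

Lemma conv_ext p h1 h2 n : (forall m, (m <= n)%N -> h1 m = h2 m) ->
  conv p h1 n = conv p h2 n.
Proof.
move=> H; apply: eq_bigr => i _; rewrite H //; exact: leq_subr.
Qed.

Lemma conv_coef p (r : {poly int}) n : conv p (fun m => r`_m) n = (p * r)`_n.
Proof. by rewrite coefM. Qed.

Lemma conv_trunc p h n : conv p h n = (p * \poly_(i < n.+1) h i)`_n.
Proof.
rewrite -conv_coef; apply: conv_ext => m Hm; by rewrite coef_poly ltnS Hm.
Qed.

Lemma conv_assoc p q h n : conv p (conv q h) n = conv (p * q) h n.
Proof.
rewrite (conv_trunc (p * q)) -mulrA -conv_coef; apply: conv_ext => m Hm.
rewrite -conv_coef; apply: conv_ext => k Hk.
by rewrite coef_poly ltnS (leq_trans Hk Hm).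
Qed.

Lemma conv_Xn k h n : conv 'X^k h n = if (k <= n)%N then h (n - k)%N else 0.
Proof.
rewrite conv_trunc coefXnM; case: leqP => Hk.
  by rewrite coef_poly ltnS leq_subr.
by [].
Qed.

Lemma conv_sub p q h n : conv (p - q) h n = conv p h n - conv q h n.
Proof.
rewrite /conv -sumrB; apply: eq_bigr => i _; by rewrite coefB mulrBl.
Qed.

Lemma conv_1 h n : conv 1 h n = h n.
Proof. by rewrite -(expr0 'X) conv_Xn subn0. Qed.

Lemma conv_X h n : conv 'X h n = if n is m.+1 then h m else 0.
Proof. by rewrite -(expr1 'X) conv_Xn; case: n => //= n; rewrite subn1. Qed.

Lemma mod_close a b w : (a < b)%N -> (b < a + w)%N -> (b %% w = a %% w)%N -> False.
Proof.
move=> H1 H2 H3.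
have : (w %| b - a)%N by rewrite -eqn_mod_dvd ?(ltnW H1) // H3.
move/(dvdn_leq _); rewrite subn_gt0 H1 => /(_ isT) H; lia.
Qed.

Lemma class_sum S T w (f : {poly int}) :
  numerical_semigroup S -> numerical_semigroup T -> (0 < w)%N ->
  (forall n, Hw_mul_coef S w f n = Hcoef T n) ->
  forall r, (r < w)%N -> \sum_(j < size f | (j %% w == r)%N) f`_j = 1.
Proof.
move=> [_ _ [NS HS]] [_ _ [NT HT]] w0 Hf r rw.
set sf := size f.
pose n := (r + w * (sf + NS + NT))%N.
have Hsf : (sf <= w * sf)%N by rewrite leq_pmull.
have HNT : (NT <= w * NT)%N by rewrite leq_pmull.
have := Hf n; rewrite /Hcoef HT; last by rewrite /n; lia.
move=> H; transitivity (Hw_mul_coef S w f n); last by rewrite H.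
rewrite /Hw_mul_coef big_mkcond /= [RHS]big_mkcond /=.
have sfn : (sf <= n.+1)%N by rewrite /n; lia.
rewrite (big_ord_widen _ (fun j => if (j %% w == r)%N then f`_j else 0) sfn).
rewrite big_mkcond /=; apply: eq_bigr => i _.
have nmod : (n %% w = r)%N by rewrite /n addnC mulnC modnMDl modn_small.
case: (ltnP i sf) => Hi; last first.
  by rewrite (nth_default 0 Hi) mul0r.
have iln : (i <= n)%N by rewrite -ltnS.
rewrite /Hwcoef -eqn_mod_dvd // nmod eq_sym.
case: eqP => Hr; last by rewrite /= mulr0.
rewrite /= HS ?mulr1 //.
rewrite leq_divRL //.
have HNS : (NS <= w * NS)%N by rewrite leq_pmull.
move: Hi iln; move: (nat_of_ord i) => j Hj1 Hj2.
rewrite mulnC; move: Hsf HNT HNS Hj1 Hj2; rewrite /n; clear; lia.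
Qed.

Definition Gc w (f : {poly int}) m :=
  \sum_(j < size f | (m < j)%N && (j %% w == m %% w)%N) f`_j.
Definition gp w (f : {poly int}) := \poly_(m < size f) Gc w f m.

Lemma coef_gp w f m : (gp w f)`_m = Gc w f m.
Proof.
rewrite coef_poly; case: ltnP => // H.
rewrite /Gc big1 // => j /andP [Hj _].
have := ltn_ord j; lia.
Qed.

Lemma Gc_split_lt w (f : {poly int}) m : (m < w)%N ->
  \sum_(j < size f | (j %% w == m)%N) f`_j = f`_m + Gc w f m.
Proof.
move=> mw.
have -> : f`_m = \sum_(j < size f | j == m :> nat) f`_j.
  rewrite (big_ord1_eq _ (fun j => f`_j)); case: ltnP => // H.
  by rewrite nth_default.
rewrite /Gc big_mkcond [in RHS]big_mkcond [X in _ + X]big_mkcond -big_split /=; apply: eq_bigr => j _.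
rewrite (modn_small mw).
case: (ltngtP j m) => H.
- rewrite (modn_small (ltn_trans H mw)) (ltn_eqF H) /=.
- by rewrite addr0.
- by rewrite add0r.
- by rewrite H (modn_small mw) eqxx addr0.
Qed.

Lemma Gc_split_ge w (f : {poly int}) m : (0 < w)%N -> (w <= m)%N ->
  Gc w f (m - w) = f`_m + Gc w f m.
Proof.
move=> w0 wm; rewrite -(subnK wm); set k := (m - w)%N; rewrite addnK.
have -> : f`_(k + w) = \sum_(j < size f | j == (k + w)%N :> nat) f`_j.
  rewrite (big_ord1_eq _ (fun j => f`_j)); case: ltnP => // H.
  by rewrite nth_default.
rewrite /Gc big_mkcond [in RHS]big_mkcond [X in _ + X]big_mkcond -big_split /=; apply: eq_bigr => j _.
rewrite modnDr.
case: (ltngtP j (k + w)) => H.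
- rewrite /= add0r.
  case: ifP => // /andP [H1 /eqP H2].
  exfalso; exact: (mod_close _ _ _ H1 H H2).
- rewrite /= add0r.
  have -> : (k < j)%N by lia.
  by [].
- rewrite /= addr0 H modnDr eqxx andbT.
  have -> : (k < k + w)%N by lia.
  by [].
Qed.

Lemma Gc01 S T w (f : {poly int}) :
  numerical_semigroup S -> numerical_semigroup T -> (0 < w)%N ->
  (forall i, 0 <= f`_i) ->
  (forall n, Hw_mul_coef S w f n = Hcoef T n) ->
  forall m, Gc w f m = 0 \/ Gc w f m = 1.
Proof.
move=> hS hT w0 Hpos Hf m.
have H1 := @class_sum S T w f hS hT w0 Hf _ (ltn_pmod m w0).
have ge0 : 0 <= Gc w f m by rewrite /Gc; apply: sumr_ge0 => i _; exact: Hpos.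
have le1 : Gc w f m <= 1.
  rewrite -H1 /Gc big_mkcond [X in _ <= X]big_mkcond /=.
  apply: ler_sum => i _.
  case: (m < i)%N => /=; first by [].
  by case: ifP => _ //; exact: Hpos.
lia.
Qed.

Lemma tele w : (1 - 'X) * \poly_(i < w) (1 : int) = 1 - 'X^w.
Proof.
apply/polyP => m.
rewrite mulrBl mul1r !coefB coefXM !coef_poly coef1 coefXn.
case: m => [|m] /=.
  by case: w => [|w].
by case: (ltngtP m.+1 w) => H; rewrite /= ?subrr ?subr0.
Qed.

Lemma coef_comp_conv S w (PS : {poly int}) m : (0 < w)%N -> is_P_poly S PS ->
  conv (1 - 'X^w) (Hwcoef S w) m = (PS \Po 'X^w)`_m.
Proof.
move=> w0 HPS.
rewrite conv_sub conv_1 conv_Xn coef_comp_poly_Xn // HPS /Pcoef /Hcoef /Hwcoef.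
case: (leqP w m) => H; last first.
  by rewrite (divn_small H); case: (w %| m)%N; rewrite /= ?subr0.
rewrite -(subnK H); set k := (m - w)%N; rewrite addnK.
rewrite dvdn_addl ?dvdnn // divnDr ?dvdnn // divnn w0 addn1.
by case: (w %| k)%N; rewrite /= ?subr0.
Qed.

Theorem theorem5 (S T : pred nat) (w : nat) (f : {poly int})
  (PS PT : {poly int}) :
  numerical_semigroup S -> numerical_semigroup T ->
  (1 <= w)%N ->
  (forall i, 0 <= f`_i) ->
  (forall n, Hw_mul_coef S w f n = Hcoef T n) ->
  is_P_poly S PS -> is_P_poly T PT ->
  exists Q : {poly int},
    [/\ PT = Q * (PS \Po 'X^w),
        Q.[0] = 1,
        Q \is monic &
        alternating_coefs Q].
Proof.
move=> hS hT w0 Hpos Hf HPS HPT.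
have hS' := hS; have hT' := hT.
set g := gp w f.
set Phi := \poly_(i < w) (1 : int).
have f0 : f`_0 = 1.
  have := Hf 0%N; rewrite /Hw_mul_coef big_ord1 /Hwcoef /Hcoef dvdn0 div0n.
  case: hS => -> _ _; case: hT => -> _ _.
  by rewrite /= mulr1.
have gb : forall m, g`_m = 0 \/ g`_m = 1.
  by move=> m; rewrite coef_gp; exact: (Gc01 _ _ _ _ hS hT w0 Hpos Hf).
have g0 : g`_0 = 0.
  rewrite coef_gp; have := Gc_split_lt w f 0 w0.
  rewrite (class_sum _ _ _ _ hS hT w0 Hf 0 w0) f0 => H; lia.
have Hfid : f = Phi + ('X^w - 1) * g.
  apply/polyP => m.
  rewrite coefD mulrBl mul1r coefB coefXnM coef_poly !coef_gp.
  case: (ltnP m w) => H.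
    have := Gc_split_lt w f m H.
    rewrite (class_sum _ _ _ _ hS hT w0 Hf m H) => E; lia.
  have := Gc_split_ge w f m w0 H; lia.
pose G := fun m : nat => if m is k.+1 then g`_k else 1.
have Gb : forall m, G m = 0 \/ G m = 1.
  by case=> [|m] /=; [right | exact: gb].
set Q := 1 + ('X - 1) * g.
have HQ : forall m, Q`_m = G m - G m.+1.
  move=> m; rewrite /Q coefD coef1 mulrBl mul1r coefB coefXM.
  by case: m => [|m] /=; rewrite ?sub0r ?add0r.
exists Q; split.
- apply/polyP => n.
  rewrite HPT.
  have -> : Pcoef T n = conv (1 - 'X) (Hcoef T) n.
    rewrite conv_sub conv_1 conv_X /Pcoef; by case: n.
  rewrite (conv_ext _ (Hcoef T) (conv f (Hwcoef S w))); last first.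
    by move=> m _; rewrite -Hf.
  rewrite conv_assoc.
  have -> : (1 - 'X) * f = Q * (1 - 'X^w).
    rewrite Hfid mulrDr tele /Q; ring.
  rewrite -conv_assoc -conv_coef; apply: conv_ext => m _.
  exact: coef_comp_conv.
- by rewrite horner_coef0 HQ /= g0 subr0.
- have mX : ('X - 1 : {poly int}) \is monic by rewrite -polyC1 monicXsubC.
  have sX : size ('X - 1 : {poly int}) = 2%N by rewrite -polyC1 size_XsubC.
  have [Eg|gn0] := eqVneq g 0.
    by rewrite /Q Eg mulr0 addr0 monic1.
  have lg : lead_coef g = 1.
    case: (gb (size g).-1) => // E.
    by move: gn0; rewrite -lead_coef_eq0 /lead_coef E eqxx.
  rewrite monicE /Q lead_coefDr ?lead_coef_monicM ?lg //.
  rewrite size_poly1 (size_monicM mX gn0) sX /=.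
  by rewrite ltnS lt0n size_poly_eq0.
- split.
    move=> i; rewrite HQ; have := Gb i; have := Gb i.+1; lia.
  move=> i j ij Qi Qj Hk.
  have HG : forall d, (i.+1 + d <= j)%N -> G (i.+1 + d)%N = G i.+1.
    elim=> [|d IH] H; first by rewrite addn0.
    have := Hk (i.+1 + d)%N; rewrite HQ addnS => E.
    rewrite -IH; last lia.
    have : G (i.+1 + d)%N - G (i.+1 + d).+1 = 0 by apply: E; lia.
    lia.
  have := HG (j - i.+1)%N; rewrite subnKC // => /(_ (leqnn _)) E.
  move: Qi Qj; rewrite !HQ; have := Gb i; have := Gb i.+1; have := Gb j.+1.
  rewrite E; lia.
Qed.
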